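(* Let $q_1,q_2$ be piecewise continuous on $[a,b]$, and let $a,b$ be consecutive zeros of a solution $u$ of $u''+q_1(t)u=0$. Suppose $J\subset[a,b]$ is an interval such that $q_1(t)\le q_2(t)$ for all $t\in[a,b]\setminus J$ and $q_1(t)>q_2(t)$ for all $t\in J$. Then every solution $v$ of $v''+q_2(t)v=0$ has at most one zero in $J$.
   Context: ''Solution'' always means a nontrivial (not identically zero) solution. *)

(* Defs.v *)
From Stdlib Require Export Reals List.
Open Scope R_scope.

Definition cont_within (a b : R) (f : R -> R) (t : R) : Prop :=
  forall eps, eps > 0 -> exists delta, delta > 0 /\
    forall s, a <= s <= b -> Rabs (s - t) < delta -> Rabs (f s - f t) < eps.

Definition deriv_within (a b : R) (f : R -> R) (t d : R) : Prop :=
  forall eps, eps > 0 -> exists delta, delta > 0 /\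
    forall h, h <> 0 -> Rabs h < delta -> a <= t + h <= b ->
      Rabs ((f (t + h) - f t) / h - d) < eps.

Definition right_limit_within (b : R) (f : R -> R) (t l : R) : Prop :=
  forall eps, eps > 0 -> exists delta, delta > 0 /\
    forall s, t < s < t + delta -> s <= b -> Rabs (f s - l) < eps.

Definition left_limit_within (a : R) (f : R -> R) (t l : R) : Prop :=
  forall eps, eps > 0 -> exists delta, delta > 0 /\
    forall s, t - delta < s < t -> a <= s -> Rabs (f s - l) < eps.

Definition piecewise_continuous (q : R -> R) (a b : R) : Prop :=
  (exists P : list R, forall t, a < t < b -> ~ In t P -> continuity_pt q t) /\
  (forall t, a <= t < b -> exists l, right_limit_within b q t l) /\
  (forall t, a < t <= b -> exists l, left_limit_within a q t l).

(* u solves u'' + q u = 0 on [a,b]: u is C^1 on [a,b] and, at every interior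
   point where q is continuous, u' is differentiable with (u')' = - q u. *)
Definition ode_solution (q : R -> R) (a b : R) (u : R -> R) : Prop :=
  exists u' : R -> R,
    (forall t, a <= t <= b -> deriv_within a b u t (u' t)) /\
    (forall t, a <= t <= b -> cont_within a b u' t) /\
    (forall t, a < t < b -> continuity_pt q t ->
        derivable_pt_lim u' t (- q t * u t)).

(* "Solution" means nontrivial solution. *)
Definition nontrivial_solution (q : R -> R) (a b : R) (u : R -> R) : Prop :=
  ode_solution q a b u /\ exists t, a <= t <= b /\ u t <> 0.

Definition is_interval (J : R -> Prop) : Prop :=
  forall x y z, J x -> J z -> x <= y <= z -> J y.

(* Main.v *)
Require Import Defs.
From Stdlib Require Import Reals Lra List Classical.
Open Scope R_scope.

Definition clamp (a b x : R) := Rmax a (Rmin b x).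

Lemma clamp_in a b x : a <= b -> a <= clamp a b x <= b.
Proof. intros; unfold clamp, Rmax, Rmin; repeat destruct Rle_dec; lra. Qed.

Lemma clamp_id a b x : a <= x <= b -> clamp a b x = x.
Proof. intros; unfold clamp, Rmax, Rmin; repeat destruct Rle_dec; lra. Qed.

Lemma clamp_lip a b x y : a <= b -> Rabs (clamp a b x - clamp a b y) <= Rabs (x - y).
Proof. intros; unfold clamp, Rmax, Rmin; repeat destruct Rle_dec; split_Rabs; lra. Qed.

Lemma cont_within_clamp a b f x : a <= b ->
  cont_within a b f (clamp a b x) -> continuity_pt (fun y => f (clamp a b y)) x.
Proof.
  intros hab H eps he. destruct (H eps he) as [d [hd Hd]].
  exists d; split; [lra|]. intros y [_ hy]. simpl in *. unfold Rdist in *.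
  apply Hd. apply clamp_in; lra.
  eapply Rle_lt_trans; [apply clamp_lip; lra| exact hy].
Qed.

Lemma cont_within_all_clamp a b f : a <= b ->
  (forall t, a <= t <= b -> cont_within a b f t) ->
  forall x, continuity_pt (fun y => f (clamp a b y)) x.
Proof. intros hab H x. apply cont_within_clamp; auto. apply H, clamp_in; auto. Qed.

Lemma cont_pt_within a b f t : continuity_pt f t -> cont_within a b f t.
Proof.
  intros H eps he. destruct (H eps he) as [d [hd Hd]].
  exists d; split; [lra|]. intros s hs h. 
  destruct (Req_dec s t) as [->|hne]. rewrite Rminus_diag, Rabs_R0; lra.
  apply (Hd s). split; [split; [exact I| auto]|]. exact h.
Qed.

Lemma cont_within_ext a b f g t : (forall x, a <= x <= b -> f x = g x) ->
  a <= t <= b -> cont_within a b f t -> cont_within a b g t.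
Proof.
  intros E ht H eps he. destruct (H eps he) as [d [hd Hd]].
  exists d; split; auto. intros s hs h. rewrite <- !E; auto.
Qed.

Lemma cont_within_restrict a b a' b' f t : a <= a' -> b' <= b ->
  cont_within a b f t -> cont_within a' b' f t.
Proof.
  intros h1 h2 H eps he. destruct (H eps he) as [d [hd Hd]].
  exists d; split; auto. intros s hs h. apply Hd; auto; lra.
Qed.

Lemma deriv_interior a b f t d : a < t < b -> deriv_within a b f t d ->
  derivable_pt_lim f t d.
Proof.
  intros ht H eps he. destruct (H eps he) as [del [hd Hd]].
  assert (hp : 0 < Rmin del (Rmin (t - a) (b - t))).
  { unfold Rmin; repeat destruct Rle_dec; lra. }
  exists (mkposreal _ hp). intros h hh hl. simpl in hl.
  assert (Rabs h < del /\ Rabs h < t - a /\ Rabs h < b - t) as [h1 [h2 h3]].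
  { revert hl; unfold Rmin; repeat destruct Rle_dec; intros; lra. }
  apply Hd; auto. split; revert h2 h3; split_Rabs; lra.
Qed.

Lemma deriv_cont a b f t d : deriv_within a b f t d -> cont_within a b f t.
Proof.
  intros H eps he. destruct (H 1 ltac:(lra)) as [del [hd Hd]].
  set (e := Rmin del (eps / (Rabs d + 1))).
  assert (hk : 0 < Rabs d + 1) by (pose proof (Rabs_pos d); lra).
  assert (he' : 0 < eps / (Rabs d + 1)) by (apply Rdiv_lt_0_compat; lra).
  exists e; split. unfold e, Rmin; destruct Rle_dec; lra.
  intros s hs hst.
  destruct (Req_dec s t) as [->|hne]. rewrite Rminus_diag, Rabs_R0; lra.
  set (h := s - t).
  assert (hh : h <> 0) by (unfold h; lra).
  assert (Rabs h < del /\ Rabs h < eps / (Rabs d + 1)) as [h1 h2].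
  { unfold e, Rmin in hst; destruct Rle_dec; fold h in hst; lra. }
  specialize (Hd h hh h1). replace (t + h) with s in Hd by (unfold h; ring).
  specialize (Hd hs).
  assert (Rabs ((f s - f t) / h) < Rabs d + 1).
  { pose proof (Rabs_triang_inv ((f s - f t) / h) d). lra. }
  replace (f s - f t) with (((f s - f t) / h) * h) by (field; auto).
  rewrite Rabs_mult.
  apply Rle_lt_trans with ((Rabs d + 1) * Rabs h).
  apply Rmult_le_compat_r; [apply Rabs_pos| lra].
  apply Rlt_le_trans with ((Rabs d + 1) * (eps / (Rabs d + 1))).
  apply Rmult_lt_compat_l; lra. right; field; lra.
Qed.

Lemma mono_base g d x y : x < y ->
  cont_within x y g x -> cont_within x y g y ->
  (forall w, x < w < y -> derivable_pt_lim g w (d w) /\ 0 <= d w) ->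
  g x <= g y.
Proof.
  intros hxy cx cy D.
  destruct (Rle_or_lt (g x) (g y)) as [|hlt]; auto. exfalso.
  set (e := (g x - g y) / 2).
  assert (he : e > 0) by (unfold e; lra).
  destruct (cx e he) as [d1 [hd1 H1]].
  destruct (cy e he) as [d2 [hd2 H2]].
  set (x' := x + Rmin d1 (y - x) / 3).
  set (y' := y - Rmin d2 (y - x) / 3).
  assert (0 < Rmin d1 (y - x) <= y - x /\ Rmin d1 (y-x) <= d1).
  { unfold Rmin; destruct Rle_dec; lra. }
  assert (0 < Rmin d2 (y - x) <= y - x /\ Rmin d2 (y-x) <= d2).
  { unfold Rmin; destruct Rle_dec; lra. }
  assert (hx' : Rabs (g x' - g x) < e).
  { apply H1. unfold x'; lra. unfold x'. rewrite Rabs_right; lra. }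
  assert (hy' : Rabs (g y' - g y) < e).
  { apply H2. unfold y'; lra. unfold y'. rewrite Rabs_left; lra. }
  assert (x' < y') by (unfold x', y'; lra).
  destruct (MVT_cor2 g d x' y') as [c [hc1 hc2]]; auto.
  { intros c hc. apply D. unfold x', y' in *; lra. }
  assert (0 <= d c) by (apply D; unfold x', y' in *; lra).
  assert (0 <= d c * (y' - x')) by (apply Rmult_le_pos; lra).
  revert hx' hy'; split_Rabs; unfold e in *; lra.
Qed.

Lemma mono (L : list R) g d : forall x y, x <= y ->
  (forall w, x <= w <= y -> cont_within x y g w) ->
  (forall w, x < w < y -> ~ In w L -> derivable_pt_lim g w (d w) /\ 0 <= d w) ->
  g x <= g y.
Proof.
  induction L as [|p L IH]; intros x y hxy C D.
  - destruct (Req_dec x y) as [->|hne]; [lra|].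
    apply (mono_base g d); try apply C; try lra.
    intros w hw. apply D; auto.
  - destruct (Rlt_or_le x p) as [h1|h1]; [destruct (Rlt_or_le p y) as [h2|h2]|].
    + apply Rle_trans with (g p).
      * apply IH; try lra. intros w hw. apply cont_within_restrict with x y; try lra. apply C; lra.
        intros w hw hn. apply D; [lra|]. intros [->|hi]; [lra|auto].
      * apply IH; try lra. intros w hw. apply cont_within_restrict with x y; try lra. apply C; lra.
        intros w hw hn. apply D; [lra|]. intros [->|hi]; [lra|auto].
    + apply IH; auto. intros w hw hn. apply D; auto. intros [->|hi]; [lra|auto].
    + apply IH; auto. intros w hw hn. apply D; auto. intros [->|hi]; [lra|auto].
Qed.

Lemma avoid (L : list R) : forall x y, x < y -> exists z, x < z < y /\ ~ In z L.
Proof.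
  induction L as [|p L IH]; intros x y hxy.
  - exists ((x+y)/2); split; [lra| auto].
  - destruct (Rlt_or_le x p) as [h1|h1].
    + destruct (IH x (Rmin y p)) as [z [hz hn]]. unfold Rmin; destruct Rle_dec; lra.
      exists z. assert (z < y /\ z < p) by (revert hz; unfold Rmin; destruct Rle_dec; lra).
      split; [lra|]. intros [->|hi]; [lra|auto].
    + destruct (IH x y hxy) as [z [hz hn]]. exists z; split; auto. intros [->|hi]; [lra|auto].
Qed.

Lemma pc_bounded q a b : a < b -> piecewise_continuous q a b ->
  exists M, forall t, a <= t <= b -> Rabs (q t) <= M.
Proof.
  intros hab [_ [HR HL]].
  set (S := fun x => a <= x <= b /\ exists M, forall t, a <= t <= x -> Rabs (q t) <= M).
  assert (hb : bound S). { exists b. intros x [hx _]. lra. }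
  assert (hS : exists x, S x).
  { exists a. split; [lra|]. exists (Rabs (q a)). intros t ht. replace t with a by lra. lra. }
  destruct (completeness S hb hS) as [m [Hub Hlub]].
  assert (ham : a <= m). { apply Hub. destruct hS as [x hx]. unfold S. split; [lra|].
    exists (Rabs (q a)). intros t ht. replace t with a by lra. lra. }
  assert (hmb : m <= b). { apply Hlub. intros x [hx _]. lra. }
  assert (HM : exists M, forall t, a <= t <= m -> Rabs (q t) <= M).
  { destruct (Req_dec m a) as [->|hne].
    - exists (Rabs (q a)). intros t ht. replace t with a by lra. lra.
    - destruct (HL m ltac:(lra)) as [l Hl]. destruct (Hl 1 ltac:(lra)) as [d [hd Hd]].
      assert (exists x, S x /\ m - d < x) as [x [[hx [M1 HM1]] hxd]].
      { apply NNPP. intro hn. assert (m <= m - d); [|lra]. apply Hlub.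
        intros x hx. destruct (Rle_or_lt x (m - d)); auto. exfalso; apply hn; eauto. }
      exists (M1 + Rabs l + 1 + Rabs (q m)). intros t ht.
      assert (0 <= M1) by (eapply Rle_trans; [apply Rabs_pos| apply (HM1 a); lra]).
      pose proof (Rabs_pos l). pose proof (Rabs_pos (q m)).
      destruct (Rle_or_lt t x). specialize (HM1 t ltac:(lra)); lra.
      destruct (Req_dec t m) as [->|htm]. lra.
      specialize (Hd t ltac:(lra) ltac:(lra)).
      pose proof (Rabs_triang_inv (q t) l). lra. }
  destruct (Req_dec m b) as [->|hne]; auto.
  exfalso. destruct HM as [M HM].
  destruct (HR m ltac:(lra)) as [l Hl]. destruct (Hl 1 ltac:(lra)) as [d [hd Hd]].
  set (eta := Rmin (d/2) (b - m)).
  assert (0 < eta <= b - m /\ eta < d) by (unfold eta, Rmin; destruct Rle_dec; lra).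
  assert (m + eta <= m); [|lra]. apply Hub. split; [lra|].
  exists (M + Rabs l + 1). intros t ht.
  assert (0 <= M) by (eapply Rle_trans; [apply Rabs_pos| apply (HM a); lra]).
  pose proof (Rabs_pos l).
  destruct (Rle_or_lt t m). specialize (HM t ltac:(lra)); lra.
  specialize (Hd t ltac:(lra) ltac:(lra)).
  pose proof (Rabs_triang_inv (q t) l). lra.
Qed.

Lemma sign_const a b f x y : a <= x -> x < y -> y <= b ->
  (forall t, a <= t <= b -> cont_within a b f t) ->
  (forall w, x < w < y -> f w <> 0) ->
  (forall w, x < w < y -> f w > 0) \/ (forall w, x < w < y -> f w < 0).
Proof.
  intros hax hxy hyb C N.
  set (g := fun z => f (clamp a b z)).
  assert (Cg : continuity g) by (intro z; apply (cont_within_all_clamp a b f); auto; lra).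
  assert (E : forall z, a <= z <= b -> g z = f z) by (intros; unfold g; rewrite clamp_id; auto).
  set (c := (x + y) / 2).
  assert (hc : x < c < y) by (unfold c; lra).
  destruct (Rlt_or_le 0 (f c)) as [hpos|hneg].
  - left. intros w hw. destruct (Rlt_or_le 0 (f w)) as [|hw']; [lra|].
    exfalso. assert (f w < 0) by (pose proof (N w hw); lra).
    destruct (Rlt_or_le w c).
    + destruct (IVT g w c Cg) as [z [hz hz0]]; auto. rewrite E; lra. rewrite E; lra.
      rewrite E in hz0 by lra. apply (N z); auto. lra.
    + assert (c < w) by (destruct (Req_dec c w); subst; lra).
      destruct (IVT (fun z => - g z) c w) as [z [hz hz0]]; auto.
      apply continuity_opp; auto. rewrite E; lra. rewrite E; lra.
      rewrite E in hz0 by lra. apply (N z); lra.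
  - right. assert (hn : f c < 0) by (pose proof (N c hc); lra).
    intros w hw. destruct (Rlt_or_le (f w) 0) as [|hw']; [lra|].
    exfalso. assert (0 < f w) by (pose proof (N w hw); lra).
    destruct (Rlt_or_le w c).
    + destruct (IVT (fun z => - g z) w c) as [z [hz hz0]]; auto.
      apply continuity_opp; auto. rewrite E; lra. rewrite E; lra.
      rewrite E in hz0 by lra. apply (N z); lra.
    + assert (c < w) by (destruct (Req_dec c w); subst; lra).
      destruct (IVT g c w Cg) as [z [hz hz0]]; auto. rewrite E; lra. rewrite E; lra.
      rewrite E in hz0 by lra. apply (N z); lra.
Qed.

Lemma ode_opp q a b u : ode_solution q a b u -> ode_solution q a b (fun x => - u x).
Proof.
  intros [u' [H1 [H2 H3]]]. exists (fun x => - u' x). split; [|split].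
  - intros t ht eps he. destruct (H1 t ht eps he) as [d [hd Hd]]. exists d; split; auto.
    intros h hh hl hr. specialize (Hd h hh hl hr).
    replace ((- u (t + h) - - u t) / h - - u' t) with (- ((u (t + h) - u t) / h - u' t)) by (field; auto).
    rewrite Rabs_Ropp; auto.
  - intros t ht eps he. destruct (H2 t ht eps he) as [d [hd Hd]]. exists d; split; auto.
    intros s hs hl. specialize (Hd s hs hl).
    replace (- u' s - - u' t) with (- (u' s - u' t)) by ring. rewrite Rabs_Ropp; auto.
  - intros t ht hc. replace (- q t * - u t) with (- (- q t * u t)) by ring.
    apply (derivable_pt_lim_opp u'); auto.
Qed.

Lemma cw_mult a b f1 f2 : a <= b ->
  (forall t, a <= t <= b -> cont_within a b f1 t) ->
  (forall t, a <= t <= b -> cont_within a b f2 t) ->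
  forall t, a <= t <= b -> cont_within a b (fun x => f1 x * f2 x) t.
Proof.
  intros hab H1 H2 t ht.
  apply cont_within_ext with (fun y => f1 (clamp a b y) * f2 (clamp a b y)); auto.
  intros; rewrite clamp_id; auto.
  apply cont_pt_within. apply (continuity_pt_mult (fun y => f1 (clamp a b y)) (fun y => f2 (clamp a b y)));
  apply cont_within_all_clamp; auto.
Qed.

Lemma cw_plus a b f1 f2 : a <= b ->
  (forall t, a <= t <= b -> cont_within a b f1 t) ->
  (forall t, a <= t <= b -> cont_within a b f2 t) ->
  forall t, a <= t <= b -> cont_within a b (fun x => f1 x + f2 x) t.
Proof.
  intros hab H1 H2 t ht.
  apply cont_within_ext with (fun y => f1 (clamp a b y) + f2 (clamp a b y)); auto.
  intros; rewrite clamp_id; auto.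
  apply cont_pt_within. apply (continuity_pt_plus (fun y => f1 (clamp a b y)) (fun y => f2 (clamp a b y)));
  apply cont_within_all_clamp; auto.
Qed.

Lemma cw_minus a b f1 f2 : a <= b ->
  (forall t, a <= t <= b -> cont_within a b f1 t) ->
  (forall t, a <= t <= b -> cont_within a b f2 t) ->
  forall t, a <= t <= b -> cont_within a b (fun x => f1 x - f2 x) t.
Proof.
  intros hab H1 H2 t ht.
  apply cont_within_ext with (fun y => f1 (clamp a b y) - f2 (clamp a b y)); auto.
  intros; rewrite clamp_id; auto.
  apply cont_pt_within. apply (continuity_pt_minus (fun y => f1 (clamp a b y)) (fun y => f2 (clamp a b y)));
  apply cont_within_all_clamp; auto.
Qed.

Lemma cw_opp a b f1 : a <= b ->
  (forall t, a <= t <= b -> cont_within a b f1 t) ->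
  forall t, a <= t <= b -> cont_within a b (fun x => - f1 x) t.
Proof.
  intros hab H1 t ht.
  apply cont_within_ext with (fun y => - f1 (clamp a b y)); auto.
  intros; rewrite clamp_id; auto.
  apply cont_pt_within. apply (continuity_pt_opp (fun y => f1 (clamp a b y)));
  apply cont_within_all_clamp; auto.
Qed.

Lemma cw_glob a b h : (forall t, continuity_pt h t) ->
  forall t, a <= t <= b -> cont_within a b h t.
Proof. intros; apply cont_pt_within; auto. Qed.

Lemma dpl_ext f g x l l' : derivable_pt_lim f x l -> l = l' -> (forall y, f y = g y) ->
  derivable_pt_lim g x l'.
Proof.
  intros H <- E eps he. destruct (H eps he) as [d Hd]. exists d. intros h hh hl.
  rewrite <- !E. auto.
Qed.

Lemma dpl_expK K w : derivable_pt_lim (fun x => exp (K * x)) w (K * exp (K * w)).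
Proof.
  eapply dpl_ext.
  apply (derivable_pt_lim_comp (fun x => K * x) exp).
  eapply dpl_ext. apply (derivable_pt_lim_scal id K w 1). apply derivable_pt_lim_id.
  reflexivity. intro; reflexivity.
  apply derivable_pt_lim_exp. simpl. ring. intro; reflexivity.
Qed.

Lemma cont_expK K t : continuity_pt (fun x => exp (K * x)) t.
Proof. apply derivable_continuous_pt. exists (K * exp (K * t)). apply dpl_expK. Qed.

Lemma dpl_E v v' qw w : derivable_pt_lim v w (v' w) -> derivable_pt_lim v' w (- qw * v w) ->
  derivable_pt_lim (fun x => v x * v x + v' x * v' x) w
    (2 * v w * v' w + 2 * v' w * (- qw * v w)).
Proof.
  intros h1 h2. eapply dpl_ext.
  apply derivable_pt_lim_plus; [apply (derivable_pt_lim_mult v v)|apply (derivable_pt_lim_mult v' v')]; eauto.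
  simpl. unfold mult_fct. ring. intro; reflexivity.
Qed.

Lemma dpl_GE K E E' w : derivable_pt_lim E w E' ->
  derivable_pt_lim (fun x => exp (K * x) * E x) w (exp (K * w) * (K * E w + E')).
Proof.
  intros h. eapply dpl_ext. apply (derivable_pt_lim_mult (fun x => exp (K * x)) E). apply dpl_expK. exact h.
  simpl. ring. intro; reflexivity.
Qed.

Lemma ineqE M qq x y : Rabs qq <= M ->
  0 <= (1 + M) * (x * x + y * y) - (2 * x * y + 2 * y * (- qq * x)) /\
  0 <= (1 + M) * (x * x + y * y) + (2 * x * y + 2 * y * (- qq * x)).
Proof.
  intros h. pose proof (Rabs_pos qq).
  pose proof (Rle_0_sqr (x-y)). pose proof (Rle_0_sqr (x+y)). unfold Rsqr in *.
  assert (2 * Rabs (x * y) <= x * x + y * y).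
  { destruct (Rle_or_lt 0 (x*y)); [rewrite Rabs_right|rewrite Rabs_left]; nra. }
  assert (Rabs (2 * x * y * (1 - qq)) <= (1 + M) * (x * x + y * y)).
  { replace (2 * x * y * (1 - qq)) with (2 * (x * y) * (1 - qq)) by ring.
    rewrite (Rabs_mult (2 * (x*y))), (Rabs_mult 2). rewrite (Rabs_right 2) by lra.
    assert (Rabs (1 - qq) <= 1 + M) by (eapply Rle_trans; [apply Rabs_triang|]; rewrite Rabs_R1, Rabs_Ropp; lra).
    pose proof (Rabs_pos (x*y)). pose proof (Rabs_pos (1 - qq)).
    replace (2 * Rabs (x * y) * Rabs (1 - qq)) with ((2 * Rabs (x * y)) * Rabs (1 - qq)) by ring.
    rewrite (Rmult_comm (1 + M)). apply Rmult_le_compat; lra. }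
  replace (2 * x * y + 2 * y * (- qq * x)) with (2 * x * y * (1 - qq)) by ring.
  revert H3. generalize (2 * x * y * (1 - qq)). intros z hz.
  destruct (Rle_or_lt 0 z); [rewrite Rabs_right in hz|rewrite Rabs_left in hz]; lra.
Qed.

Lemma Ezero ex vx v'x : 0 < ex -> ex * (vx * vx + v'x * v'x) <= 0 -> vx = 0.
Proof.
  intros he h. assert (vx * vx + v'x * v'x <= 0).
  { apply (Rmult_le_reg_l ex); lra. }
  pose proof (Rle_0_sqr vx). pose proof (Rle_0_sqr v'x). unfold Rsqr in *.
  apply Rsqr_0_uniq. unfold Rsqr. lra.
Qed.

Lemma uniq q a b v v' c :
  a < b -> piecewise_continuous q a b ->
  (forall t, a <= t <= b -> deriv_within a b v t (v' t)) ->
  (forall t, a <= t <= b -> cont_within a b v' t) ->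
  (forall t, a < t < b -> continuity_pt q t -> derivable_pt_lim v' t (- q t * v t)) ->
  a <= c <= b -> v c = 0 -> v' c = 0 -> forall x, a <= x <= b -> v x = 0.
Proof.
  intros hab PC D1 C1 D2 hc vc v'c x hx.
  destruct (pc_bounded q a b hab PC) as [M HM].
  destruct PC as [[P HP] _].
  assert (hM : 0 <= M) by (eapply Rle_trans; [apply Rabs_pos|apply (HM a); lra]).
  set (K := 1 + M).
  set (E := fun y => v y * v y + v' y * v' y).
  assert (Cv : forall t, a <= t <= b -> cont_within a b v t) by (intros; eapply deriv_cont; eauto).
  assert (CE : forall t, a <= t <= b -> cont_within a b E t).
  { apply cw_plus; try lra; apply cw_mult; auto; lra. }
  assert (Ec : E c = 0) by (unfold E; rewrite vc, v'c; ring).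
  set (E' := fun w => 2 * v w * v' w + 2 * v' w * (- q w * v w)).
  assert (DE : forall w, a < w < b -> ~ In w P -> derivable_pt_lim E w (E' w)).
  { intros w hw hn. apply dpl_E. apply deriv_interior with a b; auto. apply D1; lra.
    apply D2; auto. }
  assert (IE : forall w, a < w < b -> 0 <= K * E w - E' w /\ 0 <= K * E w + E' w).
  { intros w hw. destruct (ineqE M (q w) (v w) (v' w)) as [i1 i2]. apply HM; lra.
    unfold K, E, E'. lra. }
  destruct (Rle_or_lt c x) as [hcx|hxc].
  - assert (hm : (fun y => - (exp ((-K) * y) * E y)) c <= (fun y => - (exp ((-K) * y) * E y)) x).
    { apply (mono P (fun y => - (exp ((-K) * y) * E y)) (fun w => - (exp ((-K) * w) * ((-K) * E w + E' w))) c x); auto.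
      - intros w hw. apply cont_within_restrict with a b; try lra.
        apply cw_opp; try lra. apply cw_mult; try lra. apply cw_glob. intro; apply cont_expK. auto.
      - intros w hw hn. split.
        + apply (derivable_pt_lim_opp (fun y => exp ((-K) * y) * E y)). apply dpl_GE. apply DE; auto; lra.
        + pose proof (exp_pos ((-K) * w)). destruct (IE w ltac:(lra)).
          assert (0 <= exp ((-K) * w) * (K * E w - E' w)) by (apply Rmult_le_pos; lra). lra. }
    simpl in hm. rewrite Ec in hm.
    apply (Ezero (exp ((-K) * x)) _ (v' x)). apply exp_pos. fold (E x). lra.
  - assert (hm : (fun y => exp (K * y) * E y) x <= (fun y => exp (K * y) * E y) c).
    { apply (mono P (fun y => exp (K * y) * E y) (fun w => exp (K * w) * (K * E w + E' w)) x c); try lra.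
      - intros w hw. apply cont_within_restrict with a b; try lra.
        apply cw_mult; try lra. apply cw_glob. intro; apply cont_expK. auto.
      - intros w hw hn. split.
        + apply dpl_GE. apply DE; auto; lra.
        + pose proof (exp_pos (K * w)). destruct (IE w ltac:(lra)).
          apply Rmult_le_pos; lra. }
    simpl in hm. rewrite Ec in hm.
    apply (Ezero (exp (K * x)) _ (v' x)). apply exp_pos. fold (E x). lra.
Qed.

Lemma deriv_sign_right a b f s m d : a <= s -> s < m -> m <= b ->
  deriv_within a b f s d -> f s = 0 -> (forall w, s < w < m -> 0 < f w) -> 0 <= d.
Proof.
  intros h1 h2 h3 D fs P. destruct (Rle_or_lt 0 d) as [|hd]; auto. exfalso.
  destruct (D (- d / 2) ltac:(lra)) as [del [hdel Hd]].
  set (h := Rmin (del / 2) ((m - s) / 2)).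
  assert (0 < h /\ h < del /\ h < m - s) by (unfold h, Rmin; destruct Rle_dec; lra).
  specialize (Hd h ltac:(lra) ltac:(rewrite Rabs_right; lra) ltac:(lra)).
  rewrite fs, Rminus_0_r in Hd.
  assert (0 < f (s + h) / h) by (apply Rdiv_lt_0_compat; [apply P|]; lra).
  revert Hd; split_Rabs; lra.
Qed.

Lemma deriv_sign_left a b f s m d : a <= s -> s < m -> m <= b ->
  deriv_within a b f m d -> f m = 0 -> (forall w, s < w < m -> 0 < f w) -> d <= 0.
Proof.
  intros h1 h2 h3 D fs P. destruct (Rle_or_lt d 0) as [|hd]; auto. exfalso.
  destruct (D (d / 2) ltac:(lra)) as [del [hdel Hd]].
  set (h := Rmin (del / 2) ((m - s) / 2)).
  assert (0 < h /\ h < del /\ h < m - s) by (unfold h, Rmin; destruct Rle_dec; lra).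
  specialize (Hd (-h) ltac:(lra) ltac:(rewrite Rabs_left; lra) ltac:(lra)).
  rewrite fs, Rminus_0_r in Hd.
  assert (0 < f (m + - h) / h) by (apply Rdiv_lt_0_compat; [apply P|]; lra).
  replace (f (m + - h) / - h) with (- (f (m + - h) / h)) in Hd by (field; lra).
  revert Hd; split_Rabs; lra.
Qed.

Lemma core q1 q2 a b u v P1 P2 s m :
  a <= s -> s < m -> m <= b ->
  (forall t, a < t < b -> ~ In t P1 -> continuity_pt q1 t) ->
  (forall t, a < t < b -> ~ In t P2 -> continuity_pt q2 t) ->
  ode_solution q1 a b u -> ode_solution q2 a b v ->
  (forall t, a <= t <= b -> 0 <= u t) -> (forall t, a < t < b -> 0 < u t) ->
  v s = 0 -> v m = 0 -> (forall w, s < w < m -> 0 < v w) ->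
  (forall w, s < w < m -> q1 w > q2 w) -> False.
Proof.
  intros hs hsm hm HP1 HP2 [u' [Du [Cu Du']]] [v' [Dv [Cv Dv']]] u0 upos vs vm vpos hq.
  assert (hab : a <= b) by lra.
  set (W := fun x => u x * v' x - u' x * v x).
  assert (Cu0 : forall t, a <= t <= b -> cont_within a b u t) by (intros; eapply deriv_cont; eauto).
  assert (Cv0 : forall t, a <= t <= b -> cont_within a b v t) by (intros; eapply deriv_cont; eauto).
  assert (CW : forall t, a <= t <= b -> cont_within a b W t).
  { apply cw_minus; auto; apply cw_mult; auto. }
  set (dW := fun w => (q1 w - q2 w) * u w * v w).
  assert (DW : forall w, a < w < b -> ~ In w (P1 ++ P2) -> derivable_pt_lim W w (dW w)).
  { intros w hw hn. rewrite in_app_iff in hn.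
    assert (c1 : continuity_pt q1 w) by (apply HP1; tauto).
    assert (c2 : continuity_pt q2 w) by (apply HP2; tauto).
    eapply dpl_ext.
    apply (derivable_pt_lim_minus (fun x => u x * v' x) (fun x => u' x * v x)).
    apply (derivable_pt_lim_mult u v'). apply deriv_interior with a b; auto; apply Du; lra. apply Dv'; auto.
    apply (derivable_pt_lim_mult u' v). apply Du'; auto. apply deriv_interior with a b; auto; apply Dv; lra.
    unfold dW. ring. intro; reflexivity. }
  assert (Mono : forall x y, s <= x -> x <= y -> y <= m -> W x <= W y).
  { intros x y h1 h2 h3. apply (mono (P1 ++ P2) W dW x y h2).
    intros w hw. apply cont_within_restrict with a b; try lra. apply CW; lra.
    intros w hw hn. split. apply DW; auto; lra.
    unfold dW. assert (q1 w > q2 w) by (apply hq; lra).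
    assert (0 < u w) by (apply upos; lra). assert (0 < v w) by (apply vpos; lra).
    apply Rmult_le_pos; [apply Rmult_le_pos|]; lra. }
  assert (Ws : 0 <= W s).
  { unfold W. rewrite vs. assert (0 <= v' s) by (apply (deriv_sign_right a b v s m); auto; apply Dv; lra).
    assert (0 <= u s) by (apply u0; lra). nra. }
  assert (Wm : W m <= 0).
  { unfold W. rewrite vm. assert (v' m <= 0) by (apply (deriv_sign_left a b v s m); auto; apply Dv; lra).
    assert (0 <= u m) by (apply u0; lra). nra. }
  destruct (avoid (P1 ++ P2) s m hsm) as [z [hz hzn]].
  assert (dz : 0 < dW z).
  { unfold dW. assert (q1 z > q2 z) by (apply hq; lra).
    assert (0 < u z) by (apply upos; lra). assert (0 < v z) by (apply vpos; lra).
    apply Rmult_lt_0_compat; [apply Rmult_lt_0_compat|]; lra. }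
  destruct (DW z ltac:(lra) hzn (dW z / 2) ltac:(lra)) as [del Hd].
  pose proof (cond_pos del).
  set (h := Rmin (del / 2) ((m - z) / 2)).
  assert (0 < h /\ h < del /\ h < m - z) by (unfold h, Rmin; destruct Rle_dec; lra).
  specialize (Hd h ltac:(lra) ltac:(rewrite Rabs_right; lra)).
  assert (W z < W (z + h)).
  { assert (0 < (W (z + h) - W z) / h) by (revert Hd; split_Rabs; lra).
    assert (0 < (W (z + h) - W z)); [|lra].
    replace (W (z + h) - W z) with ((W (z + h) - W z) / h * h) by (field; lra).
    apply Rmult_lt_0_compat; lra. }
  assert (W s <= W z) by (apply Mono; lra).
  assert (W (z + h) <= W m) by (apply Mono; lra).
  lra.
Qed.

Lemma first_zero v a b s t : a <= s -> s < t -> t <= b ->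
  (forall x, a <= x <= b -> cont_within a b v x) -> v t = 0 ->
  (exists d, d > 0 /\ forall w, s < w < s + d -> v w <> 0) ->
  exists m, s < m <= t /\ v m = 0 /\ forall w, s < w < m -> v w <> 0.
Proof.
  intros h1 h2 h3 C vt [d [hd Hd]].
  set (A := fun z => s <= z <= t /\ forall w, s < w <= z -> v w <> 0).
  assert (hb : bound A) by (exists t; intros z [hz _]; lra).
  assert (hA : exists z, A z) by (exists s; split; [lra| intros; lra]).
  destruct (completeness A hb hA) as [m [Hub Hlub]].
  set (z0 := Rmin (s + d / 2) t).
  assert (s < z0 <= t /\ z0 < s + d) by (unfold z0, Rmin; destruct Rle_dec; lra).
  assert (hz0 : A z0) by (split; [lra| intros w hw; apply Hd; lra]).
  assert (hsm : s < m) by (pose proof (Hub z0 hz0); lra).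
  assert (hmt : m <= t) by (apply Hlub; intros z [hz _]; lra).
  assert (Nz : forall w, s < w < m -> v w <> 0).
  { intros w hw. apply NNPP; intro hn.
    assert (m <= w); [|lra]. apply Hlub. intros z [hz Hz].
    destruct (Rle_or_lt z w) as [|hlt]; auto. exfalso. apply (Hz w); [lra|]. tauto. }
  exists m. split; [lra|]. split; auto.
  apply NNPP; intro hvm.
  destruct (Req_dec m t) as [->|hne]; [auto|].
  destruct (C m ltac:(lra) (Rabs (v m)) ltac:(apply Rabs_pos_lt; auto)) as [e [he He]].
  set (z1 := Rmin (m + e / 2) t).
  assert (m < z1 <= t /\ z1 < m + e) by (unfold z1, Rmin; destruct Rle_dec; lra).
  assert (A z1).
  { split; [lra|]. intros w hw.
    destruct (Rlt_or_le w m) as [hwm|hwm]. apply Nz; lra.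
    intro hv. specialize (He w ltac:(lra) ltac:(rewrite Rabs_right; lra)).
    rewrite hv in He. revert He; split_Rabs; lra. }
  pose proof (Hub z1 H1). lra.
Qed.

Lemma near_nonzero a b v s t d : a <= s -> s < t -> t <= b -> d <> 0 ->
  deriv_within a b v s d -> v s = 0 ->
  exists e, e > 0 /\ forall w, s < w < s + e -> v w <> 0.
Proof.
  intros h1 h2 h3 hd D vs.
  destruct (D (Rabs d / 2)) as [del [hdel Hd]]. pose proof (Rabs_pos_lt d hd); lra.
  exists (Rmin del (t - s)). split. unfold Rmin; destruct Rle_dec; lra.
  intros w hw hv.
  assert (w - s < del /\ w - s < t - s) by (revert hw; unfold Rmin; destruct Rle_dec; lra).
  specialize (Hd (w - s) ltac:(lra) ltac:(rewrite Rabs_right; lra) ltac:(lra)).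
  replace (s + (w - s)) with w in Hd by ring. rewrite hv, vs in Hd.
  replace ((0 - 0) / (w - s) - d) with (- d) in Hd by (field; lra).
  rewrite Rabs_Ropp in Hd. pose proof (Rabs_pos_lt d hd). lra.
Qed.

Lemma main_lt (q1 q2 : R -> R) (a b : R) (u : R -> R) (J : R -> Prop) :
  a < b ->
  piecewise_continuous q1 a b ->
  piecewise_continuous q2 a b ->
  nontrivial_solution q1 a b u ->
  u a = 0 -> u b = 0 -> (forall t, a < t < b -> u t <> 0) ->
  is_interval J ->
  (forall t, J t -> a <= t <= b) ->
  (forall t, J t -> q1 t > q2 t) ->
  forall v : R -> R, nontrivial_solution q2 a b v ->
    forall s t, s < t -> J s -> J t -> v s = 0 -> v t = 0 -> False.
Proof.
  intros hab PC1 PC2 [Su _] ua ub unz IJ JI Jq v [Sv [x0 [hx0 vx0]]] s t hst Js Jt vs vt.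
  pose proof (JI s Js). pose proof (JI t Jt).
  assert (hq : forall w, s < w < t -> q1 w > q2 w).
  { intros w hw. apply Jq. apply (IJ s w t); auto; lra. }
  pose proof Sv as [v' [Dv [Cv Dv']]].
  assert (hv's : v' s <> 0).
  { intro h0. apply vx0. apply (uniq q2 a b v v' s); auto; lra. }
  assert (Cv0 : forall t, a <= t <= b -> cont_within a b v t) by (intros; eapply deriv_cont; eauto).
  destruct (near_nonzero a b v s t (v' s) ltac:(lra) hst ltac:(lra) hv's (Dv s ltac:(lra)) vs) as [e [he He]].
  destruct (first_zero v a b s t) as [m [hm [vm Nm]]]; eauto; try lra.
  destruct PC1 as [[P1 HP1] _]. destruct PC2 as [[P2 HP2] _].
  pose proof Su as [u' [Du [Cu Du']]].
  assert (Cu0 : forall t, a <= t <= b -> cont_within a b u t) by (intros; eapply deriv_cont; eauto).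
  destruct (sign_const a b u a b) as [up|un]; auto; try lra;
  destruct (sign_const a b v s m) as [vp|vn]; auto; try lra.
  - apply (core q1 q2 a b u v P1 P2 s m); auto; try lra.
    intros w hw. destruct (Req_dec w a) as [->|]; [lra|]. destruct (Req_dec w b) as [->|]; [lra|].
    apply Rlt_le, up; lra.
    intros w hw; apply hq; lra.
  - apply (core q1 q2 a b u (fun x => - v x) P1 P2 s m); auto; try lra.
    apply ode_opp; auto.
    intros w hw. destruct (Req_dec w a) as [->|]; [lra|]. destruct (Req_dec w b) as [->|]; [lra|].
    apply Rlt_le, up; lra.
    intros w hw. specialize (vn w hw). lra.
    intros w hw; apply hq; lra.
  - apply (core q1 q2 a b (fun x => - u x) v P1 P2 s m); auto; try lra.
    apply ode_opp; auto.
    intros w hw. destruct (Req_dec w a) as [->|]; [lra|]. destruct (Req_dec w b) as [->|]; [lra|].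
    specialize (un w ltac:(lra)). lra.
    intros w hw. specialize (un w hw). lra.
    intros w hw; apply hq; lra.
  - apply (core q1 q2 a b (fun x => - u x) (fun x => - v x) P1 P2 s m); auto; try lra.
    apply ode_opp; auto. apply ode_opp; auto.
    intros w hw. destruct (Req_dec w a) as [->|]; [lra|]. destruct (Req_dec w b) as [->|]; [lra|].
    specialize (un w ltac:(lra)). lra.
    intros w hw. specialize (un w hw). lra.
    intros w hw. specialize (vn w hw). lra.
    intros w hw; apply hq; lra.
Qed.

Theorem lemma1 (q1 q2 : R -> R) (a b : R) (u : R -> R) (J : R -> Prop) :
  a < b ->
  piecewise_continuous q1 a b ->
  piecewise_continuous q2 a b ->
  nontrivial_solution q1 a b u ->
  u a = 0 -> u b = 0 -> (forall t, a < t < b -> u t <> 0) ->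
  is_interval J ->
  (forall t, J t -> a <= t <= b) ->
  (forall t, a <= t <= b -> ~ J t -> q1 t <= q2 t) ->
  (forall t, J t -> q1 t > q2 t) ->
  forall v : R -> R, nontrivial_solution q2 a b v ->
    forall s t, J s -> J t -> v s = 0 -> v t = 0 -> s = t.
Proof.
  intros hab PC1 PC2 Nu ua ub unz IJ JI _ Jq v Nv s t Js Jt vs vt.
  destruct (Rtotal_order s t) as [h|[h|h]]; auto; exfalso.
  - eapply (main_lt q1 q2 a b u J); eauto.
  - eapply (main_lt q1 q2 a b u J); eauto.
Qed.
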